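(* Let $X$ be a polyhedral normed space with closed unit ball $B_X$ and dual unit ball $B_{X^*}$. Let $y\in X$ and $E=J(y)$. Then $L_E=\{x\in X: \phi(x)=\psi(x)\text{ for all }\phi,\psi\in E\}$ equals the linear span of the face $F_E=\{x\in B_X: \phi(x)=1\text{ for all }\phi\in E\}$.
   Context: A polyhedral normed space is a finite-dimensional real normed space whose closed unit ball has finitely many extreme points. The duality map is $J(x)=\{\phi\in B_{X^*}: \phi(x)=\|x\|\}$. The linear span of the empty set is $\{0\}$. *)

(* Defs.v *)
(* A finite-dimensional real normed space is modelled as
   'rV[R]_n (R : realType) equipped with an arbitrary norm N. *)
From HB Require Import structures.
From mathcomp Require Import all_boot all_order all_algebra.
From mathcomp Require Import reals.
Set Implicit Arguments. Unset Strict Implicit. Unset Printing Implicit Defensive.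
Import Order.TTheory GRing.Theory Num.Theory.
Local Open Scope ring_scope.

Section Defs.
Variables (R : realType) (n : nat).

Definition is_norm (N : 'rV[R]_n -> R) : Prop :=
  [/\ forall x, 0 <= N x,
      forall x, N x = 0 -> x = 0,
      forall (a : R) x, N (a *: x) = `|a| * N x &
      forall x y, N (x + y) <= N x + N y].

Definition unit_ball (N : 'rV[R]_n -> R) (x : 'rV[R]_n) : Prop := N x <= 1.

Definition extreme_point (C : 'rV[R]_n -> Prop) (x : 'rV[R]_n) : Prop :=
  C x /\ forall (a b : 'rV[R]_n) (t : R), C a -> C b -> 0 < t < 1 ->
    x = t *: a + (1 - t) *: b -> a = x /\ b = x.

Definition polyhedral (N : 'rV[R]_n -> R) : Prop :=
  exists s : seq 'rV[R]_n, forall x, extreme_point (unit_ball N) x -> x \in s.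

(* a linear functional on 'rV_n is represented by a column vector c:
   phi(x) = x *m c *)
Definition ev (c : 'cV[R]_n) (x : 'rV[R]_n) : R := (x *m c) 0 0.

Definition dual_ball (N : 'rV[R]_n -> R) (c : 'cV[R]_n) : Prop :=
  forall x, N x <= 1 -> `|ev c x| <= 1.

Definition duality_map (N : 'rV[R]_n -> R) (y : 'rV[R]_n) (c : 'cV[R]_n) : Prop :=
  dual_ball N c /\ ev c y = N y.

Definition L_set (E : 'cV[R]_n -> Prop) (x : 'rV[R]_n) : Prop :=
  forall phi psi, E phi -> E psi -> ev phi x = ev psi x.

Definition face (N : 'rV[R]_n -> R) (E : 'cV[R]_n -> Prop) (x : 'rV[R]_n) : Prop :=
  unit_ball N x /\ forall phi, E phi -> ev phi x = 1.

(* linear span of an arbitrary set: all finite linear combinations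
   (k = 0 gives 0, so span of the empty set is {0}) *)
Definition lin_span (S : 'rV[R]_n -> Prop) (x : 'rV[R]_n) : Prop :=
  exists (k : nat) (a : 'I_k -> R) (v : 'I_k -> 'rV[R]_n),
    (forall i, S (v i)) /\ x = \sum_(i < k) a i *: v i.

End Defs.

(* Main.v *)
Require Import Defs.
From HB Require Import structures.
From mathcomp Require Import all_boot all_order all_algebra.
From mathcomp Require Import reals.
From mathcomp Require Import classical_sets ring lra.
From Stdlib Require Import Classical.
Import Order.TTheory GRing.Theory Num.Theory.
Local Open Scope ring_scope.

Module PartA.


Section Basics.
Variables (R : realType) (n : nat) (N : 'rV[R]_n -> R).
Hypothesis hN : is_norm N.

Lemma Nge0 x : 0 <= N x. Proof. by case: hN. Qed.
Lemma NZ a x : N (a *: x) = `|a| * N x. Proof. by case: hN. Qed.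
Lemma ND x y : N (x + y) <= N x + N y. Proof. by case: hN. Qed.
Lemma Neq0 x : N x = 0 -> x = 0. Proof. by case: hN => _ h _ _; apply: h. Qed.
Lemma N0 : N 0 = 0.
Proof. by rewrite -(scale0r (0 : 'rV[R]_n)) NZ normr0 mul0r. Qed.
Lemma NN x : N (- x) = N x.
Proof. by rewrite -scaleN1r NZ normrN normr1 mul1r. Qed.
Lemma NB x y : N x - N y <= N (x - y).
Proof. have := ND (x - y) y; rewrite subrK; lra. Qed.
Lemma Nconv t a b : 0 <= t <= 1 ->
  N (t *: a + (1 - t) *: b) <= t * N a + (1 - t) * N b.
Proof.
move=> /andP[t0 t1]; apply: le_trans (ND _ _) _.
by rewrite !NZ (ger0_norm t0) (ger0_norm (_ : 0 <= 1 - t)) ?subr_ge0.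
Qed.
Lemma Nconv1 t a b : 0 <= t <= 1 -> N a <= 1 -> N b <= 1 ->
  N (t *: a + (1 - t) *: b) <= 1.
Proof.
move=> ht ha hb; apply: le_trans (Nconv t a b ht) _.
case/andP: ht => t0 t1; nra.
Qed.
Lemma Nsum m (F : nat -> 'rV[R]_n) :
  N (\sum_(i < m) F i) <= \sum_(i < m) N (F i).
Proof.
elim: m => [|m IH]; first by rewrite !big_ord0 N0.
rewrite !big_ord_recr /=; apply: le_trans (ND _ _) _; by rewrite lerD2r.
Qed.

Lemma seg x d e s : N x <= 1 -> N (x + e *: d) <= 1 -> 0 <= s <= e ->
  N (x + s *: d) <= 1.
Proof.
move=> hx hxe /andP[s0 se].
have [e0|e0] := eqVneq e 0.
  have -> : s = 0 by apply/eqP; rewrite eq_le s0 andbT -e0.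
  by rewrite scale0r addr0.
have ep : 0 < e by rewrite lt_def e0 (le_trans s0 se).
have -> : x + s *: d = (s / e) *: (x + e *: d) + (1 - s / e) *: x.
  rewrite scalerDr scalerA mulfVK // scalerBl scale1r.
  set u := (s / e) *: x; rewrite [u + _]addrC -addrA [x - u]addrC addrA.
  by rewrite addrA addrK addrC.
apply: Nconv1 => //; apply/andP; split; first exact: divr_ge0 (ltW ep).
by rewrite ler_pdivrMr // mul1r.
Qed.

Implicit Types (c d : 'cV[R]_n) (u v : 'rV[R]_n).
Lemma evDr c u v : ev c (u + v) = ev c u + ev c v.
Proof. by rewrite /ev mulmxDl !mxE. Qed.
Lemma evZr c a u : ev c (a *: u) = a * ev c u.
Proof. by rewrite /ev -scalemxAl !mxE. Qed.
Lemma evNr c u : ev c (- u) = - ev c u.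
Proof. by rewrite /ev mulNmx !mxE. Qed.
Lemma evBr c u v : ev c (u - v) = ev c u - ev c v.
Proof. by rewrite evDr evNr. Qed.
Lemma evDl c d u : ev (c + d) u = ev c u + ev d u.
Proof. by rewrite /ev mulmxDr !mxE. Qed.
Lemma evZl c a u : ev (a *: c) u = a * ev c u.
Proof. by rewrite /ev -scalemxAr !mxE. Qed.
Lemma evBl c d u : ev (c - d) u = ev c u - ev d u.
Proof. by rewrite /ev mulmxBr !mxE. Qed.
Lemma ev_sum c m (F : nat -> 'rV[R]_n) :
  ev c (\sum_(i < m) F i) = \sum_(i < m) ev c (F i).
Proof. by rewrite /ev mulmx_suml summxE. Qed.
Lemma ev0r c : ev c 0 = 0.
Proof. by rewrite /ev mul0mx !mxE. Qed.

End Basics.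
Arguments Nge0 {R n N}. Arguments NZ {R n N}. Arguments ND {R n N}.
Arguments Neq0 {R n N}. Arguments N0 {R n N}. Arguments NN {R n N}.
Arguments NB {R n N}. Arguments Nconv {R n N}. Arguments Nconv1 {R n N}.
Arguments Nsum {R n N}. Arguments seg {R n N} hN {x d e s}.
Arguments evDr {R n}. Arguments evZr {R n}. Arguments evNr {R n}. Arguments evBr {R n}.
Arguments evDl {R n}. Arguments evZl {R n}. Arguments evBl {R n}. Arguments ev_sum {R n}.
Arguments ev0r {R n}.

End PartA.
Import PartA.

Module PartB.

Section Farkas.
Variables (R : realType) (n : nat).
Implicit Types (c d : 'cV[R]_n) (u v w : 'rV[R]_n).

Definition cone m (g : nat -> 'rV[R]_n) w :=
  exists mu : nat -> R, (forall i, 0 <= mu i) /\ w = \sum_(i < m) mu i *: g i.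

Lemma ev_self_pos w : w != 0 -> 0 < ev w^T w.
Proof.
move=> wn0; rewrite /ev mxE.
have h0 : forall j : 'I_n, 0 <= w 0 j * w^T j 0.
  by move=> j; rewrite mxE -expr2 sqr_ge0.
rewrite lt_def sumr_ge0 ?andbT //; apply: contra wn0 => /eqP /psumr_eq0P H.
apply/eqP/rowP => j; rewrite mxE; have := H (fun j _ => h0 j) j isT; rewrite mxE -expr2.
by move/eqP; rewrite sqrf_eq0 => /eqP ->.
Qed.

Lemma farkas m : forall (g : nat -> 'rV[R]_n) w, cone m g w \/
  exists c, (forall i, (i < m)%N -> ev c (g i) <= 0) /\ 0 < ev c w.
Proof.
elim: m => [|m IH] g w.
  have [->|wn0] := eqVneq w 0.
    by left; exists (fun _ => 0); split => //; rewrite big_ord0.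
  by right; exists w^T; split => //; apply: ev_self_pos.
have [[mu [mu0 ->]]|[c [hc hw]]] := IH g w.
  left; exists (fun i => if i == m then 0 else mu i); split.
    by move=> i; case: ifP.
  rewrite big_ord_recr /= eqxx scale0r addr0; apply: eq_bigr => i _.
  by rewrite ltn_eqF.
have [gm0|gmp] := leP (ev c (g m)) 0.
  right; exists c; split => // i; rewrite ltnS leq_eqVlt => /orP[/eqP ->|] //.
  exact: hc.
set ga := ev c (g m).
have gan0 : ga != 0 by rewrite gt_eqF.
pose g' i := g i - (ev c (g i) / ga) *: g m.
pose w' := w - (ev c w / ga) *: g m.
have [[mu [mu0 hw']]|[c' [hc' hw']]] := IH g' w'.
  left; set S := \sum_(i < m) mu i * (ev c (g i) / ga).
  exists (fun i => if i == m then ev c w / ga - S else mu i); split.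
    move=> i; case: ifP => _ //; rewrite subr_ge0.
    apply: le_trans (_ : 0 <= _); last by apply: divr_ge0 => //; exact: ltW.
    rewrite /S -oppr_ge0 -sumrN; apply: sumr_ge0 => j _; rewrite -mulrN.
    apply: mulr_ge0 => //; rewrite -mulNr; apply: divr_ge0; last exact: ltW.
    by rewrite oppr_ge0; apply: hc.
  rewrite big_ord_recr /= eqxx.
  have -> : \sum_(i < m) (if nat_of_ord i == m then ev c w / ga - S else mu i) *: g i
      = \sum_(i < m) mu i *: g i by apply: eq_bigr => i _; rewrite ltn_eqF.
  have hww : w = w' + (ev c w / ga) *: g m by rewrite /w' subrK.
  rewrite {1}hww hw' /g'.
  have -> : \sum_(i < m) mu i *: (g i - (ev c (g i) / ga) *: g m)
      = \sum_(i < m) mu i *: g i - S *: g m.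
    rewrite /S scaler_suml -sumrB; apply: eq_bigr => i _.
    by rewrite scalerBr scalerA.
  by rewrite -addrA scalerBl [- _ + _]addrC.
right; exists (c' - (ev c' (g m) / ga) *: c); split.
  move=> i; rewrite ltnS leq_eqVlt => /orP[/eqP ->|him].
    rewrite evBl evZl -/ga mulfVK // subrr //.
  have := hc' i him; rewrite /g' evBr evZr evBl evZl.
  by have -> : ev c' (g m) / ga * ev c (g i) = ev c (g i) / ga * ev c' (g m)
    by rewrite mulrAC -mulrA mulrC.
move: hw'; rewrite /w' evBr evZr evBl evZl.
by have -> : ev c' (g m) / ga * ev c w = ev c w / ga * ev c' (g m)
    by rewrite mulrAC -mulrA mulrC.
Qed.

End Farkas.

End PartB.
Import PartB.

Module PartC.
Set Implicit Arguments. Unset Strict Implicit. Unset Printing Implicit Defensive.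

Section KM.
Variables (R : realType) (n : nat) (N : 'rV[R]_n -> R).
Hypothesis hN : is_norm N.
Implicit Types (u v w x y d : 'rV[R]_n).

Definition Dir x d := exists e, 0 < e /\ N (x + e *: d) <= 1 /\ N (x - e *: d) <= 1.

Lemma line_max x d : N x <= 1 -> d != 0 ->
  exists s, (forall t, 0 <= t -> N (x + t *: d) <= 1 -> t <= s) /\ N (x + s *: d) <= 1.
Proof.
move=> hx dn0.
have Nd0 : 0 < N d.
  rewrite lt_def (Nge0 hN) andbT; apply: contra dn0 => /eqP/(Neq0 hN) ->. by [].
pose E := fun t : R => 0 <= t /\ N (x + t *: d) <= 1.
have hs : has_sup E.
  split; first by exists 0; split => //; rewrite scale0r addr0.
  exists (2 / N d) => t [t0 ht].
  rewrite ler_pdivlMr //.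
  have : N (t *: d) <= N (x + t *: d) + N x.
    have := ND hN (x + t *: d) (- x); rewrite (NN hN) addrC addKr. by [].
  rewrite (NZ hN) ger0_norm //; lra.
exists (sup E); split.
  by move=> t t0 ht; apply: sup_upper_bound => //; split.
have [//|hlt] := leP (N (x + sup E *: d)) 1.
exfalso.
set eps := (N (x + sup E *: d) - 1) / N d.
have eps0 : 0 < eps by apply: divr_gt0 => //; rewrite subr_gt0.
have [e [e0 he] hse] := sup_adherent eps0 hs.
have hes : e <= sup E by apply: sup_upper_bound => //; split.
have : N (x + sup E *: d) <= N (x + e *: d) + (sup E - e) * N d.
  have -> : x + sup E *: d = (x + e *: d) + (sup E - e) *: d.
    by rewrite -addrA -scalerDl [e + _]addrCA subrr addr0.
  apply: le_trans (ND hN _ _) _; rewrite (NZ hN) ger0_norm ?subr_ge0 //.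
have : (sup E - e) * N d < eps * N d by rewrite ltr_pM2r //; lra.
rewrite /eps mulfVK ?gt_eqF //. lra.
Qed.


Lemma Dir0 x : N x <= 1 -> Dir x 0.
Proof. by move=> hx; exists 1; rewrite scaler0 addr0 subr0. Qed.

Lemma Dir_scale x d a : N x <= 1 -> Dir x d -> Dir x (a *: d).
Proof.
move=> hx [e [e0 [h1 h2]]].
have [a0|an0] := eqVneq a 0; first by rewrite a0 scale0r; exact: Dir0.
have [ap|an] := ltP 0 a.
  exists (e / a); split; first exact: divr_gt0.
  by rewrite scalerA divfK.
have an' : a < 0 by rewrite lt_neqAle an0 an.
exists (e / - a); split; first by apply: divr_gt0 => //; rewrite oppr_gt0.
rewrite scalerA; have -> : e / - a * a = - e by field.
by rewrite scaleNr opprK.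
Qed.

Lemma Dir_add x d1 d2 : N x <= 1 -> Dir x d1 -> Dir x d2 -> Dir x (d1 + d2).
Proof.
move=> hx [e1 [e10 [h11 h12]]] [e2 [e20 [h21 h22]]].
set e := Num.min e1 e2.
have e0 : 0 < e by rewrite lt_min e10.
have ee1 : e <= e1 by rewrite ge_min lexx.
have ee2 : e <= e2 by rewrite ge_min lexx orbT.
have h12' : N (x + e1 *: - d1) <= 1 by rewrite scalerN.
have h22' : N (x + e2 *: - d2) <= 1 by rewrite scalerN.
have hh : 0 <= (2^-1 : R) <= 1 by apply/andP; split; lra.
exists (e / 2); split; first by apply: divr_gt0.
split.
  have -> : x + e / 2 *: (d1 + d2) = 2^-1 *: (x + e *: d1) + (1 - 2^-1) *: (x + e *: d2).
    by apply/rowP => j; rewrite !mxE; field.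
  apply: Nconv1 hh _ _ => //.
    by apply: (seg hN hx h11); rewrite (ltW e0).
  by apply: (seg hN hx h21); rewrite (ltW e0).
have -> : x - e / 2 *: (d1 + d2) = 2^-1 *: (x + e *: - d1) + (1 - 2^-1) *: (x + e *: - d2).
  by apply/rowP => j; rewrite !mxE; field.
apply: Nconv1 hh _ _ => //.
  by apply: (seg hN hx h12'); rewrite (ltW e0).
by apply: (seg hN hx h22'); rewrite (ltW e0).
Qed.

Lemma rep (S : 'rV[R]_n -> Prop) : S 0 -> (forall a v, S v -> S (a *: v)) ->
  (forall u v, S u -> S v -> S (u + v)) ->
  exists A : 'M[R]_n, forall v, S v <-> (v <= A)%MS.
Proof.
move=> S0 SZ SD.
have H : forall j, exists A : 'M[R]_n, (forall u : 'rV_n, (u <= A)%MS -> S u) /\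
    ((j <= \rank A)%N \/ forall v, S v -> (v <= A)%MS).
  elim=> [|j [A [hA [hj|hS]]]].
  - exists 0; split; last by left.
    by move=> u; rewrite submx0 => /eqP ->.
  - have [hS|] := classic (forall v, S v -> (v <= A)%MS).
      by exists A; split => //; right.
    move=> hn; have [v hvv] := not_all_ex_not _ _ hn; have [Sv nvA] := imply_to_and _ _ hvv.
    exists (A + v)%MS; split.
      move=> u /sub_addsmxP [[x1 x2] /= ->]; apply: SD; first exact/hA/submxMl.
      have /sub_rVP [a ->] : (x2 *m v <= v)%MS by apply: submxMl.
      exact: SZ.
    left; apply: leq_ltn_trans hj _; apply: rank_ltmx.
    rewrite ltmxE addsmxSl /=; apply/negP => hv; apply: nvA.
    by apply/idP; apply: submx_trans hv; apply: addsmxSr.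
  - by exists A; split => //; right.
have [A [hA [hn|hS]]] := H n.+1.
  by have := rank_leq_col A; rewrite leqNgt hn.
by exists A => v; split; [apply: hS | apply: hA].
Qed.

Lemma endpoint x d : N x <= 1 -> d != 0 -> Dir x d ->
  exists s, 0 < s /\ N (x + s *: d) <= 1 /\ ~ Dir (x + s *: d) d.
Proof.
move=> hx dn0 [e [e0 [h1 h2]]].
have [s [hs1 hs2]] := line_max hx dn0.
have es : e <= s by apply: hs1 => //; exact: ltW.
exists s; split; first exact: lt_le_trans e0 es.
split => // -[f [f0 [hf _]]].
have : s + f <= s.
  apply: hs1; first by apply: addr_ge0; [exact: ltW (lt_le_trans e0 es) | exact: ltW].
  by rewrite scalerDl addrA.
lra.
Qed.

Lemma DirC a b t v : N a <= 1 -> N b <= 1 -> 0 < t <= 1 -> Dir a v ->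
  Dir (t *: a + (1 - t) *: b) v.
Proof.
move=> ha hb /andP[t0 t1] [e [e0 [h1 h2]]].
have ht : 0 <= t <= 1 by rewrite (ltW t0).
exists (t * e); split; first exact: mulr_gt0.
split.
  have -> : t *: a + (1 - t) *: b + (t * e) *: v = t *: (a + e *: v) + (1 - t) *: b.
    by apply/rowP => j; rewrite !mxE; ring.
  exact: Nconv1.
have -> : t *: a + (1 - t) *: b - (t * e) *: v = t *: (a - e *: v) + (1 - t) *: b.
  by apply/rowP => j; rewrite !mxE; ring.
exact: Nconv1.
Qed.

Lemma rank_drop y x (A : 'M[R]_n) d : N y <= 1 ->
  (forall v, Dir y v -> Dir x v) -> (forall v, Dir x v -> (v <= A)%MS) ->
  (d <= A)%MS -> ~ Dir y d ->
  exists A' : 'M[R]_n, (\rank A' < \rank A)%N /\ forall v, Dir y v -> (v <= A')%MS.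
Proof.
move=> hy hyx hxA hdA hnd.
have [A' hA'] := rep (Dir0 hy) (fun a v => Dir_scale a hy) (fun u v => Dir_add hy).
exists A'; split; last by move=> v /hA'.
apply: rank_ltmx; rewrite ltmxE; apply/andP; split.
  apply/row_subP => i; apply/hxA/hyx/hA'; exact: row_sub.
apply/negP => hAA; apply: hnd; apply/hA'; exact: submx_trans hdA hAA.
Qed.

Variable s : seq 'rV[R]_n.
Definition ee i := if N (nth 0 s i) <= 1 then nth 0 s i else 0.
Definition P x := exists lam : nat -> R, (forall i, 0 <= lam i) /\
  \sum_(i < size s) lam i = 1 /\ x = \sum_(i < size s) lam i *: ee i.

Lemma Nee i : N (ee i) <= 1.
Proof. by rewrite /ee; case: ifP => // _; rewrite (N0 hN). Qed.

Lemma P_conv a b t : 0 <= t <= 1 -> P a -> P b -> P (t *: a + (1 - t) *: b).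
Proof.
move=> /andP[t0 t1] [la [la0 [la1 ->]]] [lb [lb0 [lb1 ->]]].
exists (fun i => t * la i + (1 - t) * lb i); split.
  by move=> i; apply: addr_ge0; apply: mulr_ge0 => //; rewrite subr_ge0.
split.
  by rewrite big_split /= -!mulr_sumr la1 lb1; ring.
rewrite !scaler_sumr -big_split /=; apply: eq_bigr => i _.
by rewrite !scalerA -scalerDl.
Qed.

Lemma P_ext x : extreme_point (unit_ball N) x ->
  (forall x, extreme_point (unit_ball N) x -> x \in s) -> P x.
Proof.
move=> hx hs; have xs := hs x hx; case: hx => hxB _.
have hj : (index x s < size s)%N by rewrite index_mem.
set j := index x s.
have ej : ee j = x by rewrite /ee nth_index //; case: ifP => //; rewrite /unit_ball in hxB; rewrite hxB.
exists (fun i => if i == j then 1 else 0); split; first by move=> i; case: ifP.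
split.
  rewrite (bigD1 (Ordinal hj)) //= eqxx big1 ?addr0 // => i /eqP hi.
  by rewrite ifF //; apply/eqP => hij; apply: hi; apply: val_inj.
rewrite (bigD1 (Ordinal hj)) //= eqxx scale1r ej big1 ?addr0 // => i /eqP hi.
by rewrite ifF ?scale0r //; apply/eqP => hij; apply: hi; apply: val_inj.
Qed.

Lemma nonext x : N x <= 1 -> ~ extreme_point (unit_ball N) x ->
  exists d, d != 0 /\ Dir x d.
Proof.
move=> hx hne; apply: NNPP => H; apply: hne; split => // a b t ha hb /andP[t0 t1] hxe.
have hax : a = x.
  apply/eqP; apply: contraT => hax; exfalso; apply: H.
  exists (a - x); split; first by rewrite subr_eq0.
  have t1' : 0 < 1 - t by rewrite subr_gt0.
  set f := Num.min 1 (t / (1 - t)).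
  have f0 : 0 < f by rewrite lt_min ltr01 divr_gt0.
  exists f; split => //; split.
    apply: (seg hN (e := 1) hx); first by rewrite scale1r addrC subrK.
    by rewrite (ltW f0) ge_min lexx.
  have hb' : N (x + (t / (1 - t)) *: - (a - x)) <= 1.
    suff -> : x + (t / (1 - t)) *: - (a - x) = b by [].
    rewrite hxe; apply/rowP => j; rewrite !mxE; field.
    by rewrite gt_eqF.
  rewrite -scalerN; apply: (seg hN hx hb').
  by rewrite (ltW f0) ge_min lexx orbT.
split => //.
have t1' : 0 < 1 - t by rewrite subr_gt0.
apply/rowP => j; have := congr1 (fun v : 'rV[R]_n => v 0 j) hxe.
rewrite /= !mxE hax => h.
have : (1 - t) * (b 0 j - x 0 j) = 0 by rewrite mulrBr; lra.
by move/eqP; rewrite mulf_eq0 gt_eqF //= subr_eq0 => /eqP.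
Qed.

Hypothesis hs : forall x, extreme_point (unit_ball N) x -> x \in s.

Lemma KM k : forall x (A : 'M[R]_n), (\rank A <= k)%N -> N x <= 1 ->
  (forall d, Dir x d -> (d <= A)%MS) -> P x.
Proof.
elim: k => [|k IH] x A hk hx hD;
  (have [he|hne] := classic (extreme_point (unit_ball N) x); first exact: P_ext);
  have [d [dn0 hd]] := nonext hx hne.
  move: hk; rewrite leqn0 mxrank_eq0 => /eqP A0.
  by have := hD d hd; rewrite A0 submx0 (negbTE dn0).
have hdm : Dir x (- d) by rewrite -scaleN1r; apply: Dir_scale.
have [sp [sp0 [ha hna]]] := endpoint hx dn0 hd.
have dmn0 : - d != 0 by rewrite oppr_eq0.
have [sm [sm0 [hb hnb]]] := endpoint hx dmn0 hdm.
set a := x + sp *: d in ha hna; set b := x + sm *: - d in hb hnb.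
set lam := sm / (sp + sm).
have spm : sp + sm != 0 by rewrite gt_eqF // addr_gt0.
have hxab : x = lam *: a + (1 - lam) *: b.
  by apply/rowP => j; rewrite !mxE /lam; field.
have hxba : x = (1 - lam) *: b + (1 - (1 - lam)) *: a.
  by rewrite {1}hxab; apply/rowP => j; rewrite !mxE; ring.
have lam0 : 0 < lam <= 1.
  rewrite divr_gt0 ?addr_gt0 //= ler_pdivrMr ?addr_gt0 //; lra.
have lam1 : 0 < 1 - lam <= 1.
  have -> : 1 - lam = sp / (sp + sm) by rewrite /lam; field.
  rewrite divr_gt0 ?addr_gt0 //= ler_pdivrMr ?addr_gt0 //; lra.
have hdA := hD d hd.
have [Aa [hAa hDa]] : exists A' : 'M[R]_n, (\rank A' < \rank A)%N /\ forall v, Dir a v -> (v <= A')%MS.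
  apply: (rank_drop (x := x)) hD hdA hna => // v hv.
  by rewrite hxab; apply: DirC.
have [Ab [hAb hDb]] : exists A' : 'M[R]_n, (\rank A' < \rank A)%N /\ forall v, Dir b v -> (v <= A')%MS.
  apply: (rank_drop (x := x)) hD hdA _ => //.
    by move=> v hv; rewrite hxba; apply: DirC.
  move=> hbd; apply: hnb; rewrite -scaleN1r; exact: Dir_scale.
have Pa : P a by apply: (IH a Aa) => //; rewrite -ltnS; exact: leq_trans hAa hk.
have Pb : P b by apply: (IH b Ab) => //; rewrite -ltnS; exact: leq_trans hAb hk.
rewrite {1}hxab; apply: P_conv => //; case/andP: lam0 => l0 l1; by rewrite (ltW l0) l1.
Qed.

End KM.

End PartC.
Import PartC.

Module PartD.
Set Implicit Arguments. Unset Strict Implicit. Unset Printing Implicit Defensive.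

Section Key.
Variables (R : realType) (n : nat) (N : 'rV[R]_n -> R).
Hypothesis hN : is_norm N.
Variable s : seq 'rV[R]_n.
Hypothesis hs : forall x, extreme_point (unit_ball N) x -> x \in s.

Lemma ball_P v : N v <= 1 -> P N s v.
Proof.
move=> hv; apply: (KM hN hs (k := n) (A := 1%:M)) => //.
  exact: rank_leq_col.
by move=> d _; apply: submx1.
Qed.

Lemma KL y w : N y = 1 -> (forall t, 0 < t -> 1 < N (y + t *: w)) ->
  exists c, dual_ball N c /\ ev c y = 1 /\ 0 < ev c w.
Proof.
move=> hy hw.
have [[mu [mu0 hmu]]|[c [hc hcw]]] := @farkas R n (size s) (fun i => ee N s i - y) w.
  exfalso.
  set M := \sum_(i < size s) mu i.
  have M0 : 0 <= M by apply: sumr_ge0.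
  set t := (M + 1)^-1.
  have t0 : 0 < t by rewrite invr_gt0; lra.
  have := hw t t0; apply/negP; rewrite -leNgt.
  set X := \sum_(i < size s) mu i *: ee N s i.
  have hX : w = X - M *: y.
    rewrite hmu /X /M scaler_suml -sumrB; apply: eq_bigr => i _.
    by rewrite scalerBr.
  have -> : y + t *: w = (1 - t * M) *: y + t *: X.
    by rewrite hX; apply/rowP => j; rewrite !mxE; ring.
  have tM : 1 - t * M = t by rewrite /t; field; lra.
  rewrite tM; apply: le_trans (ND hN _ _) _.
  rewrite !(NZ hN) (gtr0_norm t0) hy.
  have : N X <= M.
    apply: le_trans (Nsum hN (size s) (fun i => mu i *: ee N s i)) _; apply: ler_sum => i _.
    rewrite (NZ hN) ger0_norm //; have := Nee hN s i.
    have := mu0 i; nra.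
  have : t * M <= t * M by [].
  move=> _ hXM.
  have : t * N X <= t * M by rewrite ler_pM2l.
  have : t + t * M = 1 by rewrite /t; field; lra.
  lra.
have hb : forall v, N v <= 1 -> ev c v <= ev c y.
  move=> v /ball_P [lam [lam0 [lam1 ->]]].
  rewrite (ev_sum c (size s) (fun i => lam i *: ee N s i)).
  have -> : ev c y = \sum_(i < size s) lam i * ev c y by rewrite -mulr_suml lam1 mul1r.
  apply: ler_sum => i _; rewrite evZr; apply: ler_wpM2l => //.
  by have := hc i (ltn_ord i); rewrite evBr subr_le0.
have wn0 : w != 0 by apply: contraTneq hcw => ->; rewrite ev0r ltxx.
have Nw0 : 0 < N w.
  rewrite lt_def (Nge0 hN) andbT; apply: contra wn0 => /eqP/(Neq0 hN) ->. by [].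
have cy0 : 0 < ev c y.
  rewrite ltNge; apply/negP => hcy.
  have := hb ((N w)^-1 *: w).
  rewrite (NZ hN) ger0_norm ?invr_ge0 ?(ltW Nw0) // mulVf ?gt_eqF // lexx evZr => /(_ isT) h.
  have : (N w)^-1 * ev c w <= 0 by apply: le_trans h hcy.
  by rewrite pmulr_rle0 ?invr_gt0 // leNgt hcw.
exists ((ev c y)^-1 *: c); split; last first.
  by rewrite !evZl mulVf ?gt_eqF //; split => //; apply: mulr_gt0 => //; rewrite invr_gt0.
move=> v hv; rewrite evZl ler_norml; apply/andP; split.
  have := hb (- v); rewrite (NN hN) => /(_ hv); rewrite evNr => h.
  rewrite mulrC ler_pdivlMr //; lra.
by rewrite mulrC ler_pdivrMr // mul1r; apply: hb.
Qed.

End Key.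

End PartD.
Import PartD.


Theorem lemma2p3 (R : realType) (n : nat) (N : 'rV[R]_n -> R)
  (hN : is_norm N) (hpoly : polyhedral N) (y : 'rV[R]_n) :
  forall x : 'rV[R]_n,
    L_set (duality_map N y) x <-> lin_span (face N (duality_map N y)) x.
Proof.
case: hpoly => s hs x.
have KL' := KL hN hs.
have norming : forall z : 'rV[R]_n, N z = 1 -> exists c, dual_ball N c /\ ev c z = 1.
  move=> z hz; have [|c [hc [hcz _]]] := KL' z z hz; last by exists c.
  move=> t t0; rewrite -{1}(scale1r z) -scalerDl (NZ hN) hz mulr1 ger0_norm; lra.
split; last first.
  move=> [k [a [v [hv ->]]]] phi psi hphi hpsi.
  have key : forall c, duality_map N y c -> ev c (\sum_(i < k) a i *: v i) = \sum_(i < k) a i.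
    move=> c hc; rewrite /ev mulmx_suml summxE; apply: eq_bigr => i _.
    rewrite -scalemxAl mxE; have := (hv i).2 c hc; rewrite /ev => ->; by rewrite mulr1.
  by rewrite !key.
move=> hL.
have [y0|yn0] := eqVneq y 0.
  have [x0|xn0] := eqVneq x 0.
    exists 0%N, (fun _ => 0), (fun _ => 0); split; first by case.
    by rewrite x0 big_ord0.
  exfalso.
  have Nx0 : 0 < N x.
    rewrite lt_def (Nge0 hN) andbT; apply: contra xn0 => /eqP/(Neq0 hN) ->. by [].
  have hnx : N ((N x)^-1 *: x) = 1.
    by rewrite (NZ hN) ger0_norm ?invr_ge0 ?(ltW Nx0) // mulVf ?gt_eqF.
  have [c [hc hcx]] := norming _ hnx.
  have h0 : duality_map N y 0.
    split; last by rewrite y0 ev0r (N0 hN).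
    by move=> z _; rewrite /ev mulmx0 mxE normr0.
  have hc' : duality_map N y c by split => //; rewrite y0 ev0r (N0 hN).
  have := hL c 0 hc' h0; rewrite [ev 0 x]/ev mulmx0 mxE.
  move: hcx; rewrite evZr => hcx hcx0.
  by move: hcx; rewrite hcx0 mulr0 => /eqP; rewrite eq_sym oner_eq0.
have Ny0 : 0 < N y.
  rewrite lt_def (Nge0 hN) andbT; apply: contra yn0 => /eqP/(Neq0 hN) ->. by [].
set y1 := (N y)^-1 *: y.
have Ny1 : N y1 = 1 by rewrite (NZ hN) ger0_norm ?invr_ge0 ?(ltW Ny0) // mulVf ?gt_eqF.
have hE : forall c, duality_map N y c <-> dual_ball N c /\ ev c y1 = 1.
  move=> c; rewrite /duality_map /y1 evZr; split => -[h1 h2]; split => //.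
    by rewrite h2 mulVf ?gt_eqF.
  have := congr1 (fun r => N y * r) h2.
  by rewrite /= mulrA mulfV ?gt_eqF // mul1r mulr1.
have [c0 [hc0 hc0y]] := norming y1 Ny1.
have hc0E : duality_map N y c0 by apply/hE.
set a := ev c0 x.
set w := x - a *: y1.
have hw : forall c, duality_map N y c -> ev c w = 0.
  move=> c hc; rewrite /w evBr evZr ((hE c).1 hc).2 mulr1.
  by rewrite (hL c c0 hc hc0E) subrr.
have [[t [t0 ht]]|hno] := classic (exists t, 0 < t /\ N (y1 + t *: w) <= 1).
  set z := y1 + t *: w.
  have fz : face N (duality_map N y) z.
    split => // c hc; rewrite /z evDr (evZr c t w) hw // mulr0 addr0; exact: ((hE c).1 hc).2.
  have fy : face N (duality_map N y) y1.
    split; first by rewrite /unit_ball Ny1.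
    by move=> c hc; exact: ((hE c).1 hc).2.
  exists 2%N, (fun i : 'I_2 => if val i == 0%N then a - t^-1 else t^-1),
    (fun i : 'I_2 => if val i == 0%N then y1 else z); split.
    by move=> i; case: ifP.
  rewrite !big_ord_recr big_ord0 /= add0r.
  rewrite /z /w; apply/rowP => j; rewrite !mxE. field; by rewrite !gt_eqF.
exfalso.
have [c [hc [hcy hcw]]] : exists c, dual_ball N c /\ ev c y1 = 1 /\ 0 < ev c w.
  apply: KL' => // t t0; rewrite ltNge; apply/negP => hle; apply: hno; by exists t.
have := hw c (proj2 (hE c) (conj hc hcy)); lra.
Qed.
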